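(* Consider any instance of set cover with $n$ elements and $m$ sets with nonnegative costs; let $B\in\mathbb{R}_+$ and $k\in\mathbb{Z}_+$ be values such that (i) for every element, the minimum cost of a set covering it is at least $36\ln m\cdot\frac{B}{k}$, and (ii) for every $k$-subset of elements, the minimum cost of a subfamily covering it is at most $B$. Then the minimum cost of a subfamily covering all elements is at most $O(\log n)\cdot B$.
   Context: Here $O(\log n)\cdot B$ means at most an absolute constant times $\log n\cdot B$, the constant being independent of the instance. *)

(* Defs.v *)
From HB Require Import structures.
From mathcomp Require Import all_boot all_order all_algebra.
From mathcomp Require Import reals exp.
Set Implicit Arguments. Unset Strict Implicit. Unset Printing Implicit Defensive.
Import Order.TTheory GRing.Theory Num.Theory.
Local Open Scope ring_scope.

Definition covers (n m : nat) (S : 'I_m -> {set 'I_n}) (F : {set 'I_m})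
    (A : {set 'I_n}) : bool :=
  A \subset \bigcup_(j in F) S j.

Definition fam_cost (R : numDomainType) (m : nat) (c : 'I_m -> R)
    (F : {set 'I_m}) : R :=
  \sum_(j in F) c j.

(* Main.v *)
Require Import Defs.
From HB Require Import structures.
From mathcomp Require Import all_boot all_order all_algebra.
From mathcomp Require Import reals exp.
From mathcomp Require Import zify ring lra.
Import Order.TTheory GRing.Theory Num.Theory.
Local Open Scope ring_scope.

Local Open Scope nat_scope.
Lemma pad (n : nat) (d : nat) (U : {set 'I_n}) : (#|U| + d <= n)%N ->
  exists A : {set 'I_n}, U \subset A /\ #|A| = (#|U| + d)%N.
Proof.
elim: d U => [|d IH] U H; first by exists U; rewrite addn0.
have : (0 < #|~: U|)%N.
  by have := cardsC U; rewrite card_ord; lia.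
case/card_gt0P => x; rewrite in_setC => xU.
have [|A [sA cA]] := IH (x |: U); first by rewrite cardsU1 xU add1n addnS in H *.
exists A; split; last by rewrite cA cardsU1 xU add1n addnS.
by apply: subset_trans sA; apply: subsetUr.
Qed.

Lemma ffact_double (u w k : nat) : (2 * w <= u)%N -> (2 ^ k * w ^_ k <= u ^_ k)%N.
Proof.
move=> H; elim: k => [|k IH]; first by rewrite !ffactn0.
rewrite !ffactnSr expnS.
have -> : (2 * 2 ^ k * (w ^_ k * (w - k)) = (2 ^ k * w ^_ k) * (2 * (w - k)))%N by ring.
apply: leq_mul => //; lia.
Qed.

Lemma bin_double (u w k : nat) : (2 * w <= u)%N -> (2 ^ k * 'C(w, k) <= 'C(u, k))%N.
Proof.
move=> H; rewrite -(leq_pmul2r (fact_gt0 k)) -mulnA !bin_ffact.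
exact: ffact_double.
Qed.

Lemma count_fam n m (k : nat) (U : {set 'I_n}) (g : {set 'I_n} -> {set 'I_m})
  (W : {set 'I_m} -> {set 'I_n}) (Fam : {set {set 'I_m}}) :
  (forall A : {set 'I_n}, A \subset U -> #|A| = k -> g A \in Fam /\ A \subset W (g A)) ->
  (forall F : {set 'I_m}, F \in Fam -> (2 * #|U :&: W F| <= #|U|)%N) ->
  (2 ^ k * 'C(#|U|, k) <= #|Fam| * 'C(#|U|, k))%N.
Proof.
move=> Hg HF.
rewrite -[in X in (X <= _)%N]cards_draws.
set D := [set A : {set 'I_n} | A \subset U & #|A| == k].
rewrite -sum1_card (@partition_big _ _ _ _ _ _ (fun A => A \in D) g (fun F => F \in Fam)); last first.
  by move=> A; rewrite /D inE => /andP [sA /eqP cA]; case: (Hg A sA cA).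
rewrite big_distrr /= -sum_nat_const; apply: leq_sum => F FF.
rewrite sum1_card.
apply: leq_trans (@bin_double _ _ k (HF F FF)).
rewrite leq_mul2l; apply/orP; right.
rewrite -cards_draws; apply: subset_leq_card; apply/subsetP => A.
rewrite unfold_in /= /D !inE => /andP [/andP [sA cA] /eqP gA]; rewrite cA andbT subsetI sA /=.
by move/eqP: cA => cA; have [_] := Hg A sA cA; rewrite gA.
Qed.

Lemma card_small_fams m (T : nat) (Fam : {set {set 'I_m}}) :
  (forall F, F \in Fam -> (#|F| <= T)%N) -> (#|Fam| <= m.+1 ^ T)%N.
Proof.
move=> HT.
pose f (t : T.-tuple (option 'I_m)) := [set x | Some x \in (t : seq _)].
have -> : (m.+1 ^ T = #|[set: T.-tuple (option 'I_m)]|)%N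
  by rewrite cardsT card_tuple card_option card_ord.
apply: leq_trans (leq_imset_card f _).
apply: subset_leq_card; apply/subsetP => F FF.
have sz : size (map Some (enum F) ++ nseq (T - #|F|) None) == T.
  by rewrite size_cat size_map size_nseq -cardE; have := HT F FF; lia.
apply/imsetP; exists (Tuple sz); first by rewrite inE.
apply/setP => x; rewrite inE /= mem_cat mem_nseq andbF orbF.
by rewrite (mem_map (@Some_inj _)) mem_enum.
Qed.

Local Open Scope ring_scope.
Lemma ln2_ge (R : realType) : 2^-1 <= ln (2 : R).
Proof.
have h := @le_ln1Dx R (- 2^-1) ltac:(lra).
have e : 1 + - 2^-1 = (2:R)^-1 by field.
by rewrite e lnV ?posrE in h; lra.
Qed.

Lemma fam_bound (R : realType) (m T k : nat) : (2 <= m)%N -> (0 < k)%N ->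
  T%:R * (36%:R * ln (m%:R : R)) <= k%:R -> (m.+1 ^ T < 2 ^ k)%N.
Proof.
move=> m2 k0.
have m1 : (1 <= m)%N by apply: ltnW.
have mm : (m.+1 <= m * m)%N by nia.
move=> H.
rewrite -(ltr_nat R) !natrX.
rewrite -ltr_ln; last 2 first.
- by rewrite posrE exprn_gt0 // ltr0n.
- by rewrite posrE exprn_gt0.
have p1 : (0:R) < m.+1%:R by rewrite ltr0n.
have p2 : (0:R) < 2 by rewrite ltr0n.
rewrite (lnXn T p1) (lnXn k p2) -(mulr_natr (ln _) T) -(mulr_natr (ln 2) k).
have lm0 : 0 <= ln (m%:R : R) by apply: ln_ge0; rewrite ler1n.
have l1 : ln (m.+1%:R : R) <= 2 * ln (m%:R : R).
  have -> : 2 * ln (m%:R : R) = ln (m%:R ^+ 2) by rewrite (lnXn 2) ?ltr0n // mulr_natl.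
  rewrite ler_ln ?posrE ?exprn_gt0 ?ltr0n // -natrX ler_nat //.
have t0 : 0 <= (T%:R : R) by [].
have k1 : 1 <= (k%:R : R) by rewrite ler1n.
have l2 := ln2_ge R.
have h1 : ln (m.+1%:R : R) * T%:R <= 2 * ln (m%:R : R) * T%:R by apply: ler_wpM2r.
have h2 : (k%:R : R) * 2^-1 <= k%:R * ln 2 by apply: ler_wpM2l.
nra.
Qed.

Lemma cost_mono (R : numDomainType) m (c : 'I_m -> R) (F G : {set 'I_m}) :
  (forall j, 0 <= c j) -> F \subset G -> fam_cost c F <= fam_cost c G.
Proof.
move=> c0 sFG; rewrite /fam_cost [X in _ <= X](big_setID F) /= (setIidPr sFG).
by rewrite lerDl sumr_ge0.
Qed.

Lemma cost_union (R : numDomainType) m (c : 'I_m -> R) (F1 F2 : {set 'I_m}) :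
  (forall j, 0 <= c j) -> fam_cost c (F1 :|: F2) <= fam_cost c F1 + fam_cost c F2.
Proof.
move=> c0; rewrite {1}/fam_cost (big_setID F1) /= setUK lerD2l.
apply: cost_mono => //.
by rewrite setDUl setDv set0U subsetDl.
Qed.

Lemma small_fam (R : realType) n m (S : 'I_m -> {set 'I_n}) (c : 'I_m -> R) (B : R) (k : nat)
  (F : {set 'I_m}) :
  0 < B -> (0 < k)%N ->
  (forall e j, e \in S j -> 36%:R * ln (m%:R : R) * (B / k%:R) <= c j) ->
  fam_cost c F <= B -> (forall j, j \in F -> S j != set0) ->
  #|F|%:R * (36%:R * ln (m%:R : R)) <= k%:R.
Proof.
move=> B0 k0 Hi cF HF.
have h : \sum_(j in F) (36%:R * ln (m%:R : R) * (B / k%:R)) <= fam_cost c F.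
  apply: ler_sum => j jF; have /set0Pn [e eS] := HF j jF; exact: Hi eS.
rewrite sumr_const in h.
have Bk : 0 < B / k%:R by rewrite divr_gt0 // ltr0n.
rewrite -(ler_pM2r Bk) -mulrA.
have -> : (k%:R : R) * (B / k%:R) = B by rewrite mulrCA divff ?mulr1 // pnatr_eq0 -lt0n.
by rewrite -(mulr_natl _ #|F|) in h; apply: le_trans h cF.
Qed.

Lemma halving (R : realType) n m (S : 'I_m -> {set 'I_n}) (c : 'I_m -> R) (B : R) (k : nat) :
  (forall j, 0 <= c j) -> 0 < B -> (0 < k)%N -> (2 <= m)%N ->
  (forall e j, e \in S j -> 36%:R * ln (m%:R : R) * (B / k%:R) <= c j) ->
  (forall A : {set 'I_n}, #|A| = k -> exists F, covers S F A /\ fam_cost c F <= B) ->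
  forall U : {set 'I_n}, (k <= #|U|)%N ->
  exists F : {set 'I_m}, fam_cost c F <= B /\ (#|U| < 2 * #|U :&: \bigcup_(j in F) S j|)%N.
Proof.
move=> c0 B0 k0 m2 Hi Hii U kU.
case: (boolP [exists F : {set 'I_m},
   (fam_cost c F <= B) && (#|U| < 2 * #|U :&: \bigcup_(j in F) S j|)%N]).
  by case/existsP => F /andP [h1 h2]; exists F.
move/existsPn => Hno; exfalso.
pose NE := [set j | S j != set0].
pose Fam := [set F : {set 'I_m} | (fam_cost c F <= B) && (F \subset NE)].
pose g (A : {set 'I_n}) := if [pick F | covers S F A && (fam_cost c F <= B)] is Some F
  then F :&: NE else set0.
have Hg : forall A : {set 'I_n}, A \subset U -> #|A| = k ->
    g A \in Fam /\ A \subset (fun F => \bigcup_(j in F) S j) (g A).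
  move=> A _ cA; rewrite /g; case: pickP => [F /andP [cov cF] | none]; last first.
    have [F [cov cF]] := Hii A cA; by have := none F; rewrite /= cov cF.
  split.
    rewrite inE subsetIr andbT; apply: le_trans cF; apply: cost_mono => //; exact: subsetIl.
  apply/subsetP => e eA; have /bigcupP [j jF ejS] := subsetP cov e eA.
  apply/bigcupP; exists j => //; rewrite inE jF inE; apply/set0Pn; by exists e.
have HF : forall F : {set 'I_m}, F \in Fam ->
    (2 * #|U :&: (fun F => \bigcup_(j in F) S j) F| <= #|U|)%N.
  move=> F; rewrite inE => /andP [cF _]; move/negP: (Hno F) => h; rewrite leqNgt; apply/negP => h2; apply: h; by rewrite cF h2.
have hc := @count_fam _ _ _ _ _ _ _ Hg HF.
have Cpos : (0 < 'C(#|U|, k))%N by rewrite bin_gt0.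
rewrite leq_pmul2r // in hc.
have : (0 < #|Fam|)%N by apply: leq_trans hc; rewrite expn_gt0.
case/card_gt0P => F0 F0F.
have [Fm FmF Fmax] := arg_maxnP (fun F : {set 'I_m} => #|F|) F0F.
have hb := @card_small_fams _ _ _ Fmax.
have : (m.+1 ^ #|Fm| < 2 ^ k)%N.
  apply: (@fam_bound R) => //.
  have FmF2 : Fm \in Fam := FmF; move: FmF2; rewrite inE => /andP [cF sNE].
  apply: (@small_fam _ _ _ _ _ _ _ _ B0 k0 Hi cF) => j jF.
  by have := subsetP sNE j jF; rewrite inE.
move: hc hb; lia.
Qed.

Lemma half_aux (a b K : nat) : (a + b < K * 2 -> a + b < 2 * a -> b < K)%N.
Proof. lia. Qed.

Lemma rounds (R : realType) n m (S : 'I_m -> {set 'I_n}) (c : 'I_m -> R) (B : R) (k : nat) :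
  (forall j, 0 <= c j) -> 0 < B -> (0 < k)%N -> (k <= n)%N -> (2 <= m)%N ->
  (forall e j, e \in S j -> 36%:R * ln (m%:R : R) * (B / k%:R) <= c j) ->
  (forall A : {set 'I_n}, #|A| = k -> exists F, covers S F A /\ fam_cost c F <= B) ->
  forall r (U : {set 'I_n}), (#|U| < k * 2 ^ r)%N ->
  exists F, covers S F U /\ fam_cost c F <= r.+1%:R * B.
Proof.
move=> c0 B0 k0 kn m2 Hi Hii.
have base : forall U : {set 'I_n}, (#|U| <= k)%N ->
    exists F, covers S F U /\ fam_cost c F <= B.
  move=> U Uk.
  have hp : (#|U| + (k - #|U|) <= n)%N by rewrite subnKC.
  have [A [sA cA]] := @pad n (k - #|U|) U hp.
  have hA : #|A| = k by rewrite cA subnKC.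
  have [F [cov cF]] := Hii A hA.
  by exists F; split => //; rewrite /covers; apply: subset_trans sA cov.
have B1 : forall r : nat, B <= r.+1%:R * B.
  by move=> r; apply: ler_peMl; [exact: ltW | rewrite ler1n].
elim=> [|r IH] U hU.
  have [|F [cov cF]] := base U; first by rewrite expn0 muln1 in hU; apply: ltnW.
  by exists F; split => //; apply: le_trans cF (B1 0%N).
case: (ltnP #|U| k) => hk.
  have [F [cov cF]] := base U (ltnW hk).
  by exists F; split => //; apply: le_trans cF (B1 _).
have [F1 [c1 h1]] := @halving _ _ _ _ _ _ _ c0 B0 k0 m2 Hi Hii U hk.
set U' := U :\: \bigcup_(j in F1) S j.
have hU' : (#|U'| < k * 2 ^ r)%N.
  apply: (@half_aux #|U :&: \bigcup_(j in F1) S j|); rewrite cardsID //.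
  by rewrite -mulnA -expnSr.
have [F2 [cov2 c2]] := IH U' hU'.
exists (F1 :|: F2); split.
  apply/subsetP => e eU; case: (boolP (e \in \bigcup_(j in F1) S j)) => eW.
    have /bigcupP [j jF ejS] := eW; apply/bigcupP; exists j => //; by rewrite inE jF.
  have : e \in U' by rewrite inE eW eU.
  move/(subsetP cov2) => /bigcupP [j jF ejS]; apply/bigcupP; exists j => //; by rewrite inE jF orbT.
apply: le_trans (@cost_union _ _ _ F1 F2 c0) _.
have -> : r.+2%:R * B = B + r.+1%:R * B by rewrite -[r.+2]add1n natrD mulrDl mul1r.
exact: lerD.
Qed.

Theorem mainTheorem7 :
  exists C : nat,
  forall (R : realType) (n m : nat) (S : 'I_m -> {set 'I_n}) (c : 'I_m -> R)
         (B : R) (k : nat),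
    (forall j, 0 <= c j) ->
    0 <= B ->
    (0 < k)%N ->
    (k <= n)%N ->
    (forall (e : 'I_n) (j : 'I_m), e \in S j ->
        36%:R * ln (m%:R : R) * (B / k%:R) <= c j) ->
    (forall A : {set 'I_n}, #|A| = k ->
        exists F : {set 'I_m}, covers S F A /\ fam_cost c F <= B) ->
    exists F : {set 'I_m}, covers S F [set: 'I_n] /\
      fam_cost c F <= C%:R * (ln (n%:R : R) + 1) * B.
Proof.
exists 2%N => R n m S c B k c0 B0 k0 kn Hi Hii.
have n0 : (0 < n)%N by apply: leq_trans kn.
have ln0 : 0 <= ln (n%:R : R) by apply: ln_ge0; rewrite ler1n.
have cov1 : forall e : 'I_n, exists F : {set 'I_m},
    e \in \bigcup_(j in F) S j /\ fam_cost c F <= B.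
  move=> e.
  have hp : (#|[set e]| + (k - 1) <= n)%N by rewrite cards1 subnKC.
  have [A [sA cA]] := @pad n (k - 1) [set e] hp.
  have hA : #|A| = k by rewrite cA cards1 subnKC.
  have [F [cov cF]] := Hii A hA.
  exists F; split => //; apply: (subsetP cov); apply: (subsetP sA); by rewrite inE.
have RHS1 : B <= 2%:R * (ln (n%:R : R) + 1) * B.
  by apply: ler_peMl => //; lra.
case: (eqVneq B 0) => [Bz|Bnz].
  exists [set j | c j == 0]; split.
    apply/subsetP => e _; have [F [eF cF]] := cov1 e.
    have /bigcupP [j jF ejS] := eF.
    apply/bigcupP; exists j => //; rewrite inE.
    have cF0 : fam_cost c F = 0.
      by apply/le_anti/andP; split; [rewrite -Bz | apply: sumr_ge0].
    by apply/eqP; apply: (psumr_eq0P _ cF0).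
  rewrite Bz mulr0 /fam_cost big1 // => j; rewrite inE; exact: eqP.
have Bpos : 0 < B by rewrite lt_def Bnz B0.
case: (leqP m 1) => hm.
  exists setT; split.
    apply/subsetP => e _; have [F [eF _]] := cov1 e.
    have /bigcupP [j jF ejS] := eF.
    by apply/bigcupP; exists j => //; rewrite inE.
  have hp : (#|(set0 : {set 'I_n})| + k <= n)%N by rewrite cards0.
  have [A [_ cA]] := @pad n k set0 hp.
  rewrite cards0 add0n in cA.
  have [F [cov cF]] := Hii A cA.
  have : (0 < #|A|)%N by rewrite cA.
  case/card_gt0P => e eA.
  have /bigcupP [j jF _] := subsetP cov e eA.
  have FT : F = setT.
    apply/eqP; rewrite eqEcard subsetT cardsT card_ord /=.
    by apply: leq_trans hm _; apply/card_gt0P; exists j.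
  by rewrite -FT; apply: le_trans cF RHS1.
set r := trunc_log 2 n.
have hn : (#|[set: 'I_n]| < k * 2 ^ r.+1)%N.
  rewrite cardsT card_ord; apply: leq_trans (trunc_log_ltn n (isT : (1 < 2)%N)) _.
  by rewrite leq_pmull.
have [F [cov cF]] := @rounds _ _ _ _ _ _ _ c0 Bpos k0 kn hm Hi Hii r.+1 _ hn.
exists F; split => //; apply: le_trans cF _.
rewrite ler_pM2r //.
have h2r : (2 ^ r <= n)%N by apply: trunc_logP.
have l2 := ln2_ge R.
have hl : (r%:R : R) * ln 2 <= ln (n%:R : R).
  have p2 : (0:R) < 2 by rewrite ltr0n.
  rewrite mulr_natl -(lnXn r p2) ler_ln; last 2 first.
  - by rewrite posrE exprn_gt0.
  - by rewrite posrE ltr0n.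
  by rewrite -natrX ler_nat.
have hr : (r%:R : R) * 2^-1 <= r%:R * ln 2 by apply: ler_wpM2l.
have -> : (r.+2%:R : R) = r%:R + 2 by rewrite -addn2 natrD.
lra.
Qed.
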